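(* The Lebesgue measure $\mu$ of the set $\{xy : x,y\in C\}$ satisfies $\mu(\{xy : x,y\in C\}) \ge \tfrac{17}{21}$.
   Context: $C=\{\sum_{k\ge1}\alpha_k3^{-k}:\alpha_k\in\{0,2\}\}$ is the middle-thirds Cantor set. *)

(* Defs.v *)
From HB Require Import structures.
From mathcomp Require Import all_boot all_order all_algebra.
From mathcomp Require Import all_classical all_reals all_analysis.
Set Implicit Arguments. Unset Strict Implicit. Unset Printing Implicit Defensive.
Import Order.TTheory GRing.Theory Num.Theory numFieldNormedType.Exports.
Local Open Scope classical_set_scope.
Local Open Scope ring_scope.

(* Middle-thirds Cantor set: { sum_{k>=1} alpha_k 3^{-k} : alpha_k in {0,2} }.
   The digit sequence is alpha : nat -> bool, with alpha k (k >= 0) encoding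
   the digit alpha_{k+1} = 2 (if true) or 0 (if false); x is the sum of the
   series, i.e. the limit of its partial sums. *)
Definition cantor_digit_sum (R : realType) (alpha : nat -> bool) : nat -> R :=
  fun n => \sum_(0 <= k < n) ((alpha k)%:R * 2) / 3 ^+ k.+1.

Definition middle_third_cantor (R : realType) : set R :=
  [set c : R | exists alpha : nat -> bool, @cantor_digit_sum R alpha n @[n --> \oo] --> c].

Definition cantor_product_set (R : realType) : set R :=
  [set z | exists x y, @middle_third_cantor R x /\ @middle_third_cantor R y /\ z = x * y].

(* Main.v *)
Require Import Defs.
From HB Require Import structures.
From mathcomp Require Import all_boot all_order all_algebra.
From mathcomp Require Import all_classical all_reals all_analysis.
From mathcomp Require Import ring lra measurable_realfun.
Import Order.TTheory GRing.Theory Num.Theory numFieldNormedType.Exports.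
Local Open Scope classical_set_scope.
Local Open Scope ring_scope.
Set Implicit Arguments. Unset Strict Implicit. Unset Printing Implicit Defensive.

Lemma cds_S (R : realType) (a : nat -> bool) n :
  cantor_digit_sum R a n.+1 = cantor_digit_sum R a n + ((a n)%:R * 2) / 3 ^+ n.+1.
Proof. by rewrite /cantor_digit_sum big_nat_recr. Qed.

Lemma cds0 (R : realType) (a : nat -> bool) : cantor_digit_sum R a 0 = 0.
Proof. by rewrite /cantor_digit_sum big_geq. Qed.

Lemma digit_ge0 (R : realType) (b : bool) n : 0 <= ((b%:R * 2) / 3 ^+ n.+1 :> R).
Proof. by case: b => /=; rewrite ?mul0r ?mul1r // divr_ge0 // exprn_ge0. Qed.

Lemma digit_le (R : realType) (b : bool) n :
  ((b%:R * 2) / 3 ^+ n.+1 :> R) + (3 ^+ n.+1)^-1 <= (3 ^+ n)^-1.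
Proof.
have h3 : (3 ^+ n : R) != 0 by rewrite expf_neq0.
case: b => /=; rewrite ?mul0r ?mul1r ?add0r.
- rewrite [leLHS](_ : _ = (3 ^+ n)^-1) // exprS; field.
  by rewrite h3.
- rewrite exprS invfM ger_pMl ?invr_gt0 ?exprn_gt0 // invf_le1 // ?ler1n //.
Qed.

Lemma cds_nd (R : realType) (a : nat -> bool) :
  {homo cantor_digit_sum R a : n m / (n <= m)%N >-> n <= m}.
Proof.
apply/nondecreasing_seqP => n.
by rewrite cds_S lerDl digit_ge0.
Qed.

Lemma cds_up (R : realType) (a : nat -> bool) n m : (n <= m)%N ->
  cantor_digit_sum R a m + (3 ^+ m)^-1 <= cantor_digit_sum R a n + (3 ^+ n)^-1.
Proof.
elim: m => [|m IH]; first by rewrite leqn0 => /eqP ->.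
rewrite leq_eqVlt => /orP [/eqP -> //|/IH].
apply: le_trans; rewrite cds_S -addrA lerD2l; exact: digit_le.
Qed.

Lemma cds_le (R : realType) (a : nat -> bool) n m :
  cantor_digit_sum R a m <= cantor_digit_sum R a n + (3 ^+ n)^-1.
Proof.
case: (leqP n m) => h.
  apply: (le_trans _ (@cds_up R a n m h)); by rewrite lerDl invr_ge0 exprn_ge0.
apply: (le_trans (@cds_nd R a m n (ltnW h))); by rewrite lerDl invr_ge0 exprn_ge0.
Qed.

Lemma cds_cvg (R : realType) (a : nat -> bool) : cvgn (cantor_digit_sum R a).
Proof.
apply: nondecreasing_is_cvgn; first exact: (@cds_nd R).
exists 1 => _ [m _ <-]; have := cds_le R a 0 m; by rewrite cds0 expr0 invr1 add0r.
Qed.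

Definition cg (R : realType) (a : nat -> bool) : R := limn (cantor_digit_sum R a).

Lemma cg_ge (R : realType) (a : nat -> bool) n : cantor_digit_sum R a n <= cg R a.
Proof. apply: nondecreasing_cvgn_le; [exact: cds_nd|exact: cds_cvg]. Qed.

Lemma cg_le (R : realType) (a : nat -> bool) n : cg R a <= cantor_digit_sum R a n + (3 ^+ n)^-1.
Proof. apply: limr_le; first exact: (@cds_cvg R). by apply: nearW => m; exact: (@cds_le R). Qed.

Lemma cg_C (R : realType) (a : nat -> bool) : @middle_third_cantor R (cg R a).
Proof. exists a; exact: (@cds_cvg R). Qed.

Lemma C_cg (R : realType) x : @middle_third_cantor R x -> exists a, x = cg R a.
Proof. case=> a ha; exists a; by rewrite /cg (cvg_lim _ ha). Qed.
Lemma small0 (R : realType) (d K : R) : (forall n, `|d| <= K / 3 ^+ n) -> d = 0.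
Proof.
move=> h; apply/eqP; apply/negPn/negP => hd.
have hd' : 0 < `|d| by rewrite normr_gt0.
set n := Num.Def.trunc (K / `|d|).
have h1 : K / `|d| < n.+1%:R := truncnS_gt _.
have h2 : (n.+1 < 3 ^ n.+1)%N := ltn_expl _ (isT : (1 < 3)%N).
have h3 : (n.+1%:R : R) < 3 ^+ n.+1 by rewrite -natrX ltr_nat.
have h4 := h n.+1.
have hP : (0:R) < 3 ^+ n.+1 by rewrite exprn_gt0.
rewrite ler_pdivlMr // in h4.
have h5 : K / `|d| < 3 ^+ n.+1 := lt_trans h1 h3.
rewrite ltr_pdivrMr // in h5.
move: h4 h5; set P := 3 ^+ n.+1; set D := `|d|; move=> h4 h5.
have : D * P < D * P by apply: (le_lt_trans h4); rewrite mulrC.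
by rewrite ltxx.
Qed.
Definition shiftd (b : bool) (a : nat -> bool) : nat -> bool :=
  fun n => if n is k.+1 then a k else b.

Lemma cds_shift (R : realType) b a n :
  cantor_digit_sum R (shiftd b a) n.+1 = (b%:R * 2) / 3 + cantor_digit_sum R a n / 3.
Proof.
elim: n => [|n IH]; first by rewrite cds_S cds0 add0r cds0 mul0r addr0 expr1.
rewrite [LHS]cds_S IH [in RHS]cds_S /= exprS.
have h : (3 ^+ n.+1 : R) != 0 by rewrite expf_neq0.
by field; rewrite h.
Qed.

Lemma near_eq (R : realType) (x y e : R) l : l <= x -> x <= l + e -> l <= y -> y <= l + e ->
  `|x - y| <= e.
Proof. move=> *; rewrite ler_norml; apply/andP; split; lra. Qed.

Lemma cg_shift (R : realType) b a : cg R (shiftd b a) = (b%:R * 2) / 3 + cg R a / 3.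
Proof.
apply/eqP; rewrite -subr_eq0; apply/eqP; apply: (@small0 R _ 1) => n.
apply: (near_eq (l := cantor_digit_sum R (shiftd b a) n.+1)).
- exact: cg_ge.
- have := cg_le R (shiftd b a) n.+1; rewrite exprS invfM mul1r.
  have : 3^-1 * (3 ^+ n)^-1 <= (3 ^+ n)^-1 :> R.
    by rewrite ger_pMl ?invr_gt0 ?exprn_gt0 // invf_le1 // ?ler1n.
  lra.
- rewrite cds_shift lerD2l ler_pM2r ?invr_gt0 //; exact: cg_ge.
- rewrite cds_shift -addrA lerD2l mul1r.
  have := cg_le R a n; set u := cantor_digit_sum R a n; set v := cg R a.
  set w := (3 ^+ n)^-1 : R; move=> h.
  have hw : 0 <= w by rewrite invr_ge0 exprn_ge0.
  lra.
Qed.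

Lemma C0 (R : realType) : @middle_third_cantor R 0.
Proof.
exists (fun _ => false); apply: cvg_near_cst; apply: nearW => n.
by rewrite /cantor_digit_sum big1 // => i _; rewrite mul0r mul0r.
Qed.

Lemma C_div3 (R : realType) c : @middle_third_cantor R c -> @middle_third_cantor R (c / 3).
Proof.
move=> /C_cg [a ->]; have := cg_C R (shiftd false a); rewrite cg_shift /=.
by rewrite mul0r mul0r add0r.
Qed.

Lemma C_add2div3 (R : realType) c : @middle_third_cantor R c -> @middle_third_cantor R ((2 + c) / 3).
Proof.
move=> /C_cg [a ->]; have := cg_C R (shiftd true a); rewrite cg_shift /=.
by rewrite mul1r -mulrDl.
Qed.
Definition Piece (R : realType) (k : nat) (u : R) :=
  forall c, @middle_third_cantor R c -> @middle_third_cantor R ((u + c) / 3 ^+ k).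

Lemma piece00 (R : realType) : Piece 0 (0 : R).
Proof. by move=> c hc; rewrite add0r expr0 divr1. Qed.

Lemma piece_0 (R : realType) k u : Piece k u -> Piece k.+1 (3 * u : R).
Proof.
move=> h c /C_div3 /h; congr (@middle_third_cantor R _).
have h3 : (3 ^+ k : R) != 0 by rewrite expf_neq0.
by rewrite exprS; field; rewrite h3.
Qed.

Lemma piece_2 (R : realType) k u : Piece k u -> Piece k.+1 (3 * u + 2 : R).
Proof.
move=> h c /C_add2div3 /h; congr (@middle_third_cantor R _).
have h3 : (3 ^+ k : R) != 0 by rewrite expf_neq0.
by rewrite exprS; field; rewrite h3.
Qed.

Definition och (R : realType) (a b w : R) : bool * bool :=
  if 9 * w <= (3 * a + 1) * (3 * b + 1) then (false, false)
  else if 9 * w <= (3 * a + 1) * (3 * b + 3) then (false, true)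
  else if 9 * w <= (3 * a + 3) * (3 * b + 1) then (true, false)
  else (true, true).

Definition Inv (R : realType) (a b w : R) :=
  [/\ 1 <= a, a + 1 <= b, b <= 3 * a - 1, a * b <= w & w <= (a + 1) * (b + 1)].

Lemma och_inv (R : realType) (a b w : R) : Inv a b w ->
  Inv (3 * a + (och a b w).1%:R * 2) (3 * b + (och a b w).2%:R * 2) (9 * w).
Proof.
case=> h1 h2 h3 h4 h5; rewrite /och.
case: ifP => c1; [|case: ifP => c2; [|case: ifP => c3]] => /=;
  rewrite ?mul0r ?mul1r ?addr0; split; try nra.
Qed.
Fixpoint ost (R : realType) (a b z : R) (n : nat) : R * R * R :=
  if n is m.+1 then
    let s := ost a b z m in
    (3 * s.1.1 + (och s.1.1 s.1.2 s.2).1%:R * 2,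
     3 * s.1.2 + (och s.1.1 s.1.2 s.2).2%:R * 2, 9 * s.2)
  else (a, b, z).

Definition oda (R : realType) (a b z : R) n :=
  (och (ost a b z n).1.1 (ost a b z n).1.2 (ost a b z n).2).1.
Definition odb (R : realType) (a b z : R) n :=
  (och (ost a b z n).1.1 (ost a b z n).1.2 (ost a b z n).2).2.

Lemma ost_inv (R : realType) (a b z : R) n : Inv a b z ->
  Inv (ost a b z n).1.1 (ost a b z n).1.2 (ost a b z n).2.
Proof. move=> h; elim: n => //= n IH; exact: och_inv. Qed.

Lemma ost_val (R : realType) (a b z : R) n :
  [/\ (ost a b z n).1.1 = 3 ^+ n * (a + cantor_digit_sum R (oda a b z) n),
      (ost a b z n).1.2 = 3 ^+ n * (b + cantor_digit_sum R (odb a b z) n) &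
      (ost a b z n).2 = 9 ^+ n * z].
Proof.
elim: n => [|n [IH1 IH2 IH3]]; first by rewrite /= !cds0 !expr0 !mul1r !addr0.
have h3 : (3 ^+ n : R) != 0 by rewrite expf_neq0.
rewrite [ost _ _ _ n.+1]/= -/(oda a b z n) -/(odb a b z n) IH1 IH2 IH3 !cds_S.
split => //=; last by rewrite exprS mulrA.
all: by rewrite exprS; field; rewrite h3.
Qed.
Lemma cds_ge0 (R : realType) a n : 0 <= cantor_digit_sum R a n.
Proof. by have := @cds_nd R a 0 n (leq0n n); rewrite cds0. Qed.

Lemma cds_le1 (R : realType) a n : cantor_digit_sum R a n <= 1.
Proof. by have := cds_le R a 0 n; rewrite cds0 expr0 invr1 add0r. Qed.

Lemma omega (R : realType) (a b z : R) : Inv a b z ->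
  exists x y, @middle_third_cantor R x /\ @middle_third_cantor R y /\ z = (a + x) * (b + y).
Proof.
move=> hI; exists (cg R (oda a b z)), (cg R (odb a b z)).
split; first exact: cg_C; split; first exact: cg_C.
have [a1 ab _ _ _] := hI.
apply/eqP; rewrite -subr_eq0; apply/eqP; apply: (@small0 R _ (a + b + 3)) => n.
have [v1 v2 v3] := ost_val a b z n; have := ost_inv n hI; case; rewrite v1 v2 v3 => _ _ _ l u.
have xl := cg_ge R (oda a b z) n; have xu := cg_le R (oda a b z) n.
have yl := cg_ge R (odb a b z) n; have yu := cg_le R (odb a b z) n.
have S0 := cds_ge0 R (oda a b z) n; have S1 := cds_le1 R (oda a b z) n.
have T0 := cds_ge0 R (odb a b z) n; have T1 := cds_le1 R (odb a b z) n.
move: l u xl xu yl yu S0 S1 T0 T1.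
set S := cantor_digit_sum R (oda a b z) n; set T := cantor_digit_sum R (odb a b z) n.
set x := cg R (oda a b z); set y := cg R (odb a b z).
have hE : (0 : R) < 3 ^+ n by rewrite exprn_gt0.
have e1 : (3 ^+ n : R)^-1 <= 1 by rewrite invf_le1 // exprn_ege1 // ler1n.
have e0 : (0 : R) < (3 ^+ n)^-1 by rewrite invr_gt0.
have h9 : (9 : R) ^+ n = 3 ^+ n * 3 ^+ n by rewrite -exprMn; congr (_ ^+ _); lra.
rewrite h9; set E := (3 ^+ n : R) in hE e1 e0 *; set e := E^-1 in e1 e0 *.
have Ee : E * e = 1 by rewrite /e mulfV // gt_eqF.
move=> l u xl xu yl yu S0 S1 T0 T1.
have zl : (a + S) * (b + T) <= z.
  rewrite -(ler_pM2l (mulr_gt0 hE hE)); move: l.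
  by rewrite [X in X <= _ -> _](_ : _ = E * E * ((a + S) * (b + T))) //; ring.
have zu : z <= (a + S + e) * (b + T + e).
  rewrite -(ler_pM2l (mulr_gt0 hE hE)); move: u.
  have -> : E * (a + S) + 1 = E * (a + S + e) by rewrite !mulrDr Ee.
  have -> : E * (b + T) + 1 = E * (b + T + e) by rewrite !mulrDr Ee.
  by rewrite [X in _ <= X -> _](_ : _ = E * E * ((a + S + e) * (b + T + e))) //; ring.
have q1 : (a + S) * (b + T) <= (a + x) * (b + y).
  apply: ler_pM; lra.
have q2 : (a + x) * (b + y) <= (a + S + e) * (b + T + e).
  apply: ler_pM; lra.
have d1 : (a + S + e) * (b + T + e) - (a + S) * (b + T) = e * (a + b + S + T + e) by ring.
have d2 : e * (a + b + S + T + e) <= e * (a + b + 3).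
  rewrite ler_pM2l //; lra.
rewrite mulrC ler_norml; apply/andP; split; lra.
Qed.
Lemma J_cover (R : realType) k1 k2 (p z : R) : Piece k1 p -> Piece k2 p -> 2 <= p ->
  (p ^+ 2 + 2 * p / 3) / 3 ^+ (k1 + k2) <= z ->
  z <= (p ^+ 2 + 4 * p / 3 + 1 / 3) / 3 ^+ (k1 + k2) ->
  @cantor_product_set R z.
Proof.
move=> P1 P2 p2 zl zu.
have hE : (0 : R) < 3 ^+ (k1 + k2) by rewrite exprn_gt0.
set w := 9 * 3 ^+ (k1 + k2) * z.
have hI : Inv (3 * p) (3 * p + 2) w.
  rewrite /Inv /w; rewrite ler_pdivlMr // in zu; rewrite ler_pdivrMr // in zl.
  split; nra.
have [x [y [Cx [Cy e]]]] := omega hI.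
exists ((3 * p + x) / 3 ^+ k1.+1), ((3 * p + 2 + y) / 3 ^+ k2.+1).
split; first exact: (piece_0 P1).
split; first exact: (piece_2 P2).
have h1 : (3 ^+ k1 : R) != 0 by rewrite expf_neq0.
have h2 : (3 ^+ k2 : R) != 0 by rewrite expf_neq0.
have -> : z = w / (9 * 3 ^+ (k1 + k2)) by rewrite /w exprD; field; rewrite h1 h2.
rewrite e !exprS exprD; field.
by rewrite h1 h2.
Qed.
Definition cI (R : realType) (a b : R) : set R := [set x | a <= x <= b].

Definition Hole (R : realType) (m : nat) (p : R) : set R :=
  cI ((p ^+ 2 + 4 * p / 3 + 1 / 3) / 3 ^+ m) ((p ^+ 2 + 4 * p / 3 + 4 / 9) / 3 ^+ m).

Definition DImg (R : realType) (m : nat) (p : R) : set R :=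
  cI (p ^+ 2 / 3 ^+ m) ((p + 1) ^+ 2 / 3 ^+ m).

Fixpoint DBad (R : realType) (K m : nat) (p : R) : set R :=
  if K is K'.+1 then Hole m p `|` DBad K' m.+2 (3 * p) `|` DBad K' m.+2 (3 * p + 2)
  else DImg m p.

Lemma div9 (R : realType) (m : nat) (x : R) : x / 3 ^+ m.+2 = x / 9 / 3 ^+ m.
Proof.
have h : (3 ^+ m : R) != 0 by rewrite expf_neq0.
rewrite !exprS; field; by rewrite h.
Qed.

Lemma diag_cover (R : realType) K k1 k2 (p z : R) : Piece k1 p -> Piece k2 p -> 2 <= p ->
  DImg (k1 + k2) p z -> @cantor_product_set R z \/ DBad K (k1 + k2) p z.
Proof.
elim: K k1 k2 p => [|K IH] k1 k2 p P1 P2 p2 hz; first by right.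
have hE : (0 : R) < 3 ^+ (k1 + k2) by rewrite exprn_gt0.
move: hz; rewrite /DImg /cI /= => /andP [zl zu].
have e2 : (k1.+1 + k2.+1 = (k1 + k2).+2)%N by rewrite addSn addnS.
case: (leP z ((p ^+ 2 + 2 * p / 3 + 1 / 9) / 3 ^+ (k1 + k2))) => c1.
  have := IH k1.+1 k2.+1 (3 * p) (piece_0 P1) (piece_0 P2) ltac:(lra).
  rewrite e2 => -[].
  - rewrite /DImg /cI /= !div9; apply/andP; split.
    + by apply: le_trans zl; rewrite le_eqVlt; apply/orP; left; apply/eqP; congr (_ / _); field.
    + by apply: le_trans c1 _; rewrite le_eqVlt; apply/orP; left; apply/eqP; congr (_ / _); field.
  - by left.
  - by right; left; right.
case: (leP z ((p ^+ 2 + 4 * p / 3 + 1 / 3) / 3 ^+ (k1 + k2))) => c2.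
  left; apply: (J_cover P1 P2 p2) => //.
  apply: le_trans (ltW c1); rewrite ler_pM2r ?invr_gt0 //; lra.
case: (leP z ((p ^+ 2 + 4 * p / 3 + 4 / 9) / 3 ^+ (k1 + k2))) => c3.
  by right; left; left; rewrite /Hole /cI /=; apply/andP; split => //; apply: ltW.
have := IH k1.+1 k2.+1 (3 * p + 2) (piece_2 P1) (piece_2 P2) ltac:(lra).
rewrite e2 => -[].
- rewrite /DImg /cI /= !div9; apply/andP; split.
  + by apply: le_trans (ltW c3); rewrite le_eqVlt; apply/orP; left; apply/eqP; congr (_ / _); field.
  + by apply: le_trans zu _; rewrite le_eqVlt; apply/orP; left; apply/eqP; congr (_ / _); field.
- by left.
- by right; right.
Qed.
Lemma cI_itv (R : realType) (a b : R) : cI a b = [set` `[a, b]%R].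
Proof. by apply/seteqP; split => x /=; rewrite in_itv. Qed.

Lemma cI_meas (R : realType) (a b : R) : measurable (cI a b).
Proof. rewrite cI_itv; exact: measurable_itv. Qed.

Lemma lam_cI (R : realType) (a b : R) : a <= b ->
  lebesgue_measure (cI a b) = (b - a)%:E.
Proof.
move=> ab; rewrite cI_itv lebesgue_measure_itv /=.
case: ltP => h; first by rewrite EFinB.
have -> : b = a by apply/eqP; rewrite eq_le ab -lee_fin h.
by rewrite subrr.
Qed.

Lemma lam_cI_le (R : realType) (a b : R) : a <= b ->
  (lebesgue_measure (cI a b) <= (b - a)%:E)%E.
Proof. by move=> ab; rewrite lam_cI. Qed.

Lemma DBad_meas (R : realType) K m (p : R) : measurable (DBad K m p).
Proof.
elim: K m p => [|K IH] m p /=; first exact: cI_meas.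
apply: measurableU; [apply: measurableU|]; [exact: cI_meas|exact: IH|exact: IH].
Qed.

Fixpoint hK (R : realType) (K : nat) : R := if K is K'.+1 then 1 / 9 + 2 / 9 * hK R K' else 0.

Lemma hK_le (R : realType) K : 0 <= hK R K <= 1 / 7.
Proof. elim: K => [|K IH] /=; lra. Qed.

Lemma DBad_le (R : realType) K m (p : R) : 0 <= p ->
  (lebesgue_measure (DBad K m p) <= ((hK R K + 2 * (p + 1) * (2 / 3) ^+ K) / 3 ^+ m)%:E)%E.
Proof.
elim: K m p => [|K IH] m p p0 /=.
  have hE : (0 : R) < (3 ^+ m)^-1 by rewrite invr_gt0 exprn_gt0.
  rewrite /DImg lam_cI; last by rewrite ler_pM2r //; nra.
  rewrite lee_fin expr0 mulr1 add0r -mulrBl ler_pM2r //; nra.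
apply: (le_trans (measureU2 _ _ _)).
- apply: measurableU; [exact: cI_meas|exact: DBad_meas].
- exact: DBad_meas.
apply: (le_trans (leeD (measureU2 _ _ _) (lexx _))).
- exact: cI_meas.
- exact: DBad_meas.
have hE : (0 : R) < (3 ^+ m)^-1 by rewrite invr_gt0 exprn_gt0.
rewrite /Hole.
apply: le_trans; first (apply: leeD; first apply: leeD).
- apply: lam_cI_le; rewrite ler_pM2r //; lra.
- apply: IH; nra.
- apply: IH; nra.
rewrite -!EFinD lee_fin !div9.
have hq : (0 : R) <= (2 / 3) ^+ K by rewrite exprn_ge0 //; lra.
have hk := hK_le R K.
rewrite -!mulrBl -!mulrDl ler_pM2r // [(2 / 3) ^+ K.+1]exprS.
move: hq hk; set q := (2 / 3) ^+ K; set h := hK R K; move=> hq hk; lra.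
Qed.
Definition gapS (R : realType) (j : nat) : set R := cI (1 / 3 ^+ j.+1) (4 / 9 / 3 ^+ j).

Fixpoint TB (R : realType) (K N j : nat) : set R :=
  if N is N'.+1 then @gapS R j `|` @DBad R K j.+2 2 `|` TB K N' j.+1
  else cI 0 (1 / 3 ^+ j).

Lemma TB_meas (R : realType) K N j : measurable (@TB R K N j).
Proof.
elim: N j => [|N IH] j /=; first exact: cI_meas.
apply: measurableU; [apply: measurableU|]; [exact: cI_meas|exact: DBad_meas|exact: IH].
Qed.

Definition cK (R : realType) K : R := 1 / 9 + (hK R K + 6 * (2 / 3) ^+ K) / 9.

Lemma TB_le (R : realType) K N j :
  (lebesgue_measure (@TB R K N j) <= ((1 / 3 ^+ N + 3 / 2 * cK R K) / 3 ^+ j)%:E)%E.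
Proof.
have hq : (0 : R) <= (2 / 3) ^+ K by rewrite exprn_ge0 //; lra.
have hk := hK_le R K.
elim: N j => [|N IH] j /=.
  have hE : (0 : R) < (3 ^+ j)^-1 by rewrite invr_gt0 exprn_gt0.
  apply: le_trans; first apply: lam_cI_le; first by rewrite mul1r ltW.
  rewrite lee_fin subr0 expr0 divr1 mul1r [leRHS]mulrC mulrDr mulr1 lerDl.
  rewrite /cK; apply: mulr_ge0; first exact: ltW.
  move: hq hk; set q := (2 / 3) ^+ K; set h := hK R K; move=> hq hk; lra.
have hE : (0 : R) < (3 ^+ j)^-1 by rewrite invr_gt0 exprn_gt0.
apply: (le_trans (measureU2 _ _ _)).
- apply: measurableU; [exact: cI_meas|exact: DBad_meas].
- exact: TB_meas.
apply: le_trans; first (apply: leeD; first apply: (measureU2 _ _ _)).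
- exact: cI_meas.
- exact: DBad_meas.
- exact: IH.
apply: le_trans; first (apply: leeD; first apply: leeD).
- apply: lam_cI_le; rewrite exprS invfM mul1r; move: hE; set e := (3 ^+ j)^-1 => hE; lra.
- apply: DBad_le; lra.
- exact: lexx.
rewrite -!EFinD lee_fin div9 exprS invfM !mul1r exprS invfM /cK.
move: hq hk hE; set q := (2 / 3) ^+ K; set h := hK R K; set e := (3 ^+ j)^-1.
set f := (3 ^+ N)^-1; move=> hq hk hE.
have hf : 0 <= f by rewrite invr_ge0 exprn_ge0.
nra.
Qed.
Lemma piece_zero (R : realType) j : Piece j (0 : R).
Proof. elim: j => [|j IH]; first exact: piece00. by have := piece_0 IH; rewrite mulr0. Qed.

Lemma piece_two (R : realType) j : Piece j.+1 (2 : R).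
Proof. by have := piece_2 (@piece_zero R j); rewrite mulr0 add0r. Qed.

Lemma TB_cover (R : realType) K N j (z : R) : 0 <= z <= 1 / 3 ^+ j ->
  @cantor_product_set R z \/ @TB R K N j z.
Proof.
elim: N j => [|N IH] j hz; first by right.
have hE : (0 : R) < (3 ^+ j)^-1 by rewrite invr_gt0 exprn_gt0.
move: hz => /andP [z0 zu].
case: (leP z (1 / 3 ^+ j.+1)) => c1.
  by case: (IH j.+1 ltac:(apply/andP; split => //)) => h; [left|right; right].
case: (leP z (4 / 9 / 3 ^+ j)) => c2.
  by right; left; left; rewrite /gapS /cI /=; apply/andP; split => //; apply: ltW.
have := @diag_cover R K j.+1 1 2 z (@piece_two R j) (@piece_two R 0) ltac:(lra).
rewrite addn1 => -[].
- rewrite /DImg /cI /= !div9; apply/andP; split.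
  + apply: le_trans (ltW c2); rewrite le_eqVlt; apply/orP; left; apply/eqP; congr (_ / _); rewrite expr2; lra.
  + apply: le_trans zu _; rewrite le_eqVlt; apply/orP; left; apply/eqP; congr (_ / _); rewrite expr2; lra.
- by left.
- by right; left; right.
Qed.
Lemma prefix_near (a : cantor_space) n :
  \forall b \near a, forall i, (i < n)%N -> a i = b i.
Proof.
elim: n => [|n IH]; first by near=> z => ?; rewrite ltn0.
near=> z => i; rewrite leq_eqVlt => /predU1P[|iSn]; last by rewrite (near IH z).
move=> [->]; near: z; exists (proj n @^-1` [set a n]).
split => //; suff : @open cantor_space (proj n @^-1` [set a n]) by [].
apply: open_comp; [move=> + _; exact: proj_continuous| apply: discrete_open].
Unshelve. all: end_near. Qed.

Lemma cds_prefix (R : realType) (a b : nat -> bool) n : (forall i, (i < n)%N -> a i = b i) ->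
  cantor_digit_sum R a n = cantor_digit_sum R b n.
Proof. move=> h; apply: eq_big_nat => i /andP [_ hi]; by rewrite h. Qed.

Lemma exists_small (R : realType) (e : R) : 0 < e -> exists n, (3 ^+ n)^-1 < e.
Proof.
move=> e0; set n := Num.Def.trunc (e^-1).
have h1 : e^-1 < n.+1%:R := truncnS_gt _.
have h2 : (n.+1 < 3 ^ n.+1)%N := ltn_expl _ (isT : (1 < 3)%N).
have h3 : (n.+1%:R : R) < 3 ^+ n.+1 by rewrite -natrX ltr_nat.
exists n.+1; rewrite -[e]invrK ltf_pV2 ?inE ?posrE ?invr_gt0 ?exprn_gt0 //.
exact: lt_trans h1 h3.
Qed.

Lemma cg_cont (R : realType) : continuous (fun a : cantor_space => cg R a).
Proof.
move=> a; apply/cvgrPdist_le => e e0.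
have [n hn] := exists_small e0.
near=> b.
have hp : forall i, (i < n)%N -> a i = b i by near: b; exact: prefix_near.
have := near_eq (cg_ge R a n) (cg_le R a n) _ _.
rewrite (cds_prefix R hp) => /(_ _ (cg_ge R b n) (cg_le R b n)) h.
exact: le_trans h (ltW hn).
Unshelve. all: end_near. Qed.
Lemma CC_image (R : realType) : @cantor_product_set R =
  (fun p : cantor_space * cantor_space => cg R p.1 * cg R p.2) @` setT.
Proof.
apply/seteqP; split => z.
- case=> x [y [/C_cg [a ->] [/C_cg [b ->] ->]]]; by exists (a, b).
- case=> -[a b] _ <-; exists (cg R a), (cg R b); split; first exact: cg_C.
  by split; first exact: cg_C.
Qed.

Lemma CC_meas (R : realType) : measurable (@cantor_product_set R).
Proof.
apply: compact_measurable.
rewrite CC_image; apply: continuous_compact.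
  apply: continuous_subspaceT => p.
  apply: cvgM.
  - apply: (@continuous_comp _ _ _ fst (fun a : cantor_space => cg R a)); last exact: cg_cont.
    exact: cvg_fst.
  - apply: (@continuous_comp _ _ _ snd (fun a : cantor_space => cg R a)); last exact: cg_cont.
    exact: cvg_snd.
rewrite -setXTT; apply: compact_setX; exact: cantor_space_compact.
Qed.
Lemma geo_small (R : realType) (d : R) : 0 < d -> exists K, (2 / 3 : R) ^+ K < d.
Proof.
move=> d0.
have : geometric (1 : R) (2 / 3) x @[x --> \oo] --> 0.
  apply: cvg_geometric; rewrite ger0_norm; lra.
move=> /cvgrPdist_lt /(_ d d0) [N _ hN].
exists N; have := hN N (leqnn N); rewrite /geometric /= sub0r normrN mul1r.
by rewrite ger0_norm // exprn_ge0 //; lra.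
Qed.

Lemma third_le (R : realType) K : 1 / 3 ^+ K <= (2 / 3 : R) ^+ K.
Proof.
rewrite expr_div_n ler_pM2r ?invr_gt0 ?exprn_gt0 //.
by rewrite exprn_ege1 //; lra.
Qed.

Theorem theorem3p9 (R : realType) :
  measurable (@cantor_product_set R) /\
  ((17 / 21 : R)%:E <= lebesgue_measure (@cantor_product_set R))%E.
Proof.
split; first exact: CC_meas.
have key K : ((1 : R)%:E <= lebesgue_measure (@cantor_product_set R) +
    ((1 / 3 ^+ K + 3 / 2 * cK R K))%:E)%E.
  have h01 : lebesgue_measure (cI (0 : R) 1) = (1 : R)%:E by rewrite lam_cI ?subr0 //; lra.
  rewrite -h01.
  have sub : cI (0 : R) 1 `<=` @cantor_product_set R `|` @TB R K K 0.
    move=> z hz; apply: TB_cover; by rewrite expr0 divr1.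
  apply: (@le_trans _ _ (lebesgue_measure (@cantor_product_set R `|` @TB R K K 0))).
    apply: (@le_measure _ _ _ lebesgue_measure).
    - rewrite inE; exact: cI_meas.
    - rewrite inE; apply: measurableU; [exact: CC_meas|exact: TB_meas].
    - exact: sub.
  apply: le_trans; first apply: measureU2; [exact: CC_meas|exact: TB_meas|].
  apply: leeD; first exact: lexx.
  by have := @TB_le R K K 0; rewrite expr0 divr1.
have hm0 := measure_ge0 lebesgue_measure (@cantor_product_set R).
move: key hm0; case: (lebesgue_measure (@cantor_product_set R)) => [r| |] key hm0 //; last first.
  - by have := key 0%N; rewrite /= leeNy_eq.
  - exact: leey.
rewrite lee_fin; apply/negPn/negP; rewrite -ltNge => hr.
have [K hK] := @geo_small R ((17 / 21 - r) / 4) ltac:(lra).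
have := key K; rewrite -EFinD lee_fin /cK.
have := third_le R K; have := hK_le R K.
move: hK; set q := (2 / 3 : R) ^+ K; set h := hK R K; set f := 1 / 3 ^+ K.
move=> *; clear key hm0; lra.
Qed.
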